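(* In the one-shot wage theft problem described in the context, suppose $C'(0)<Py_H-Py_L$ and let $a^*$ be an optimal effort level (a maximizer of $g$ on $[0,1)$). Then every optimal solution of the problem with effort level $a^*$ has promised wages $w_i^*(a^* )$ and wage thefts $b_i^*(a^* )$, $i\in\{H,L\}$; i.e. these are the unique optimal wages and wage thefts.
   Context: Fix $P>0$, $y_H>y_L\ge 0$, a real number $u$ (reservation utility) and $\gamma\in(0,1]$ (inspection probability). Let $C:[0,1)\to\mathbb{R}$ be the worker's effort cost: $C(0)=0$, $C$ increasing, strictly convex, twice differentiable, $C(a)\to\infty$ as $a\to1$. Let $\eta:[0,\infty)\to\mathbb{R}$ be the penalty: strictly convex, increasing, twice differentiable, $\eta(0)=0$. The one-shot wage theft problem is: choose $a,w_H,w_L,b_H,b_L$ to maximize $a\,(Py_H-w_H+b_H-\gamma\eta(b_H))+(1-a)\,(Py_L-w_L+b_L-\gamma\eta(b_L))$ subject to $a\in\arg\max_{a'\in[0,1)}\{a'w_H+(1-a')w_L-C(a')\}$; $a w_H+(1-a)w_L-C(a)\ge u$; $w_H,w_L\ge0$; $0\le b_L\le w_L$, $0\le b_H\le w_H$; $a\in[0,1)$. Let $\beta\ge0$ satisfy $\gamma\eta'(\beta)=1$ (assumed to exist). For $a\in[0,1)$ define $w_L^*(a)=\max\{0,u-aC'(a)+C(a)\}$, $w_H^*(a)=w_L^*(a)+C'(a)$, $b_i^*(a)=\min\{\beta,w_i^*(a)\}$, and $g(a)=a\,(Py_H-w_H^*(a)+b_H^*(a)-\gamma\eta(b_H^*(a)))+(1-a)\,(Py_L-w_L^*(a)+b_L^*(a)-\gamma\eta(b_L^*(a)))$;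 optimal effort levels are the maximizers of $g$ on $[0,1)$. *)

(* Defs.v *)
From Stdlib Require Import Reals.
Open Scope R_scope.

(* f' is the derivative of f on the set D, taken within D
   (so one-sided at boundary points of D such as 0). *)
Definition is_deriv_on (f f' : R -> R) (D : R -> Prop) : Prop :=
  forall x, D x ->
    limit1_in (fun y => (f y - f x) / (y - x)) (fun y => D y /\ y <> x) (f' x) x.

Definition strictly_convex_on (f : R -> R) (D : R -> Prop) : Prop :=
  forall x y t, D x -> D y -> x <> y -> 0 < t < 1 ->
    f (t * x + (1 - t) * y) < t * f x + (1 - t) * f y.

Definition increasing_on (f : R -> R) (D : R -> Prop) : Prop :=
  forall x y, D x -> D y -> x <= y -> f x <= f y.

Definition unit_int (a : R) : Prop := 0 <= a < 1.
Definition nonneg_half_line (x : R) : Prop := 0 <= x.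

Definition tends_to_infty_at_1 (C : R -> R) : Prop :=
  forall M, exists d, 0 < d /\ forall a, unit_int a -> 1 - d < a -> M < C a.

Definition state_profit (P y gamma : R) (eta : R -> R) (w b : R) : R :=
  P * y - w + b - gamma * eta b.

Definition objective (P yH yL gamma : R) (eta : R -> R)
  (a wH wL bH bL : R) : R :=
  a * state_profit P yH gamma eta wH bH
  + (1 - a) * state_profit P yL gamma eta wL bL.

Definition worker_utility (C : R -> R) (wH wL a : R) : R :=
  a * wH + (1 - a) * wL - C a.

Definition feasible (u : R) (C : R -> R) (a wH wL bH bL : R) : Prop :=
  unit_int a /\
  (forall a', unit_int a' -> worker_utility C wH wL a' <= worker_utility C wH wL a) /\
  u <= worker_utility C wH wL a /\
  0 <= wH /\ 0 <= wL /\
  0 <= bL <= wL /\ 0 <= bH <= wH.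

Definition optimal_solution (P yH yL u gamma : R) (C eta : R -> R)
  (a wH wL bH bL : R) : Prop :=
  feasible u C a wH wL bH bL /\
  forall a' wH' wL' bH' bL', feasible u C a' wH' wL' bH' bL' ->
    objective P yH yL gamma eta a' wH' wL' bH' bL'
    <= objective P yH yL gamma eta a wH wL bH bL.

Definition wL_star (u : R) (C Cp : R -> R) (a : R) : R :=
  Rmax 0 (u - a * Cp a + C a).

Definition wH_star (u : R) (C Cp : R -> R) (a : R) : R :=
  wL_star u C Cp a + Cp a.

Definition b_star (beta w : R) : R := Rmin beta w.

Definition g_fun (P yH yL u gamma beta : R) (C Cp eta : R -> R) (a : R) : R :=
  objective P yH yL gamma eta a
    (wH_star u C Cp a) (wL_star u C Cp a)
    (b_star beta (wH_star u C Cp a)) (b_star beta (wL_star u C Cp a)).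

(* Main.v *)
Require Import Defs.
From Stdlib Require Import Reals Lra Psatz Classical.
Open Scope R_scope.

Lemma lim_le (q : R -> R) Dom l x K :
  limit1_in q Dom l x ->
  (forall d, 0 < d -> exists y, Dom y /\ Rabs (y - x) < d /\ q y <= K) -> l <= K.
Proof.
  unfold limit1_in, limit_in; intros H Hy.
  destruct (Rle_or_lt l K) as [h|h]; auto.
  destruct (H (l - K)) as [al [Hal Hf]]; [lra|].
  destruct (Hy al Hal) as [y [Dy [Hd Hq]]].
  specialize (Hf y (conj Dy Hd)). simpl in Hf; unfold Rdist in Hf.
  apply Rabs_def2 in Hf; lra.
Qed.

Lemma lim_ge (q : R -> R) Dom l x K :
  limit1_in q Dom l x ->
  (forall d, 0 < d -> exists y, Dom y /\ Rabs (y - x) < d /\ K <= q y) -> K <= l.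
Proof.
  unfold limit1_in, limit_in; intros H Hy.
  destruct (Rle_or_lt K l) as [h|h]; auto.
  destruct (H (K - l)) as [al [Hal Hf]]; [lra|].
  destruct (Hy al Hal) as [y [Dy [Hd Hq]]].
  specialize (Hf y (conj Dy Hd)). simpl in Hf; unfold Rdist in Hf.
  apply Rabs_def2 in Hf; lra.
Qed.

Lemma D1 s A K : 0 < s -> A <= K * s -> A / s <= K.
Proof.
  intros. assert (Hi : 0 < / s) by (apply Rinv_0_lt_compat; lra).
  assert (E : A / s - K = / s * (A - K * s)) by (field; lra).
  assert (0 <= / s * (K * s - A)) by (apply Rmult_le_pos; lra). nra.
Qed.
Lemma D2 s A K : 0 < s -> K * s <= A -> K <= A / s.
Proof.
  intros. assert (Hi : 0 < / s) by (apply Rinv_0_lt_compat; lra).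
  assert (E : A / s - K = / s * (A - K * s)) by (field; lra).
  assert (0 <= / s * (A - K * s)) by (apply Rmult_le_pos; lra). nra.
Qed.
Lemma D3 s A K : s < 0 -> K * s <= A -> A / s <= K.
Proof.
  intros. assert (Hi : / s < 0) by (apply Rinv_lt_0_compat; lra).
  assert (E : A / s - K = / s * (A - K * s)) by (field; lra).
  assert (0 <= (- / s) * (A - K * s)) by (apply Rmult_le_pos; lra). nra.
Qed.
Lemma D4 s A K : s < 0 -> A <= K * s -> K <= A / s.
Proof.
  intros. assert (Hi : / s < 0) by (apply Rinv_lt_0_compat; lra).
  assert (E : A / s - K = / s * (A - K * s)) by (field; lra).
  assert (0 <= (- / s) * (K * s - A)) by (apply Rmult_le_pos; lra). nra.
Qed.

Lemma tangent (f f' : R -> R) (D : R -> Prop) x0 x :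
  is_deriv_on f f' D -> D x0 -> D x -> x <> x0 ->
  (forall t, 0 < t < 1 -> D (t * x + (1 - t) * x0)) ->
  (forall t, 0 < t < 1 -> f (t * x + (1 - t) * x0) <= t * f x + (1 - t) * f x0) ->
  f x0 + f' x0 * (x - x0) <= f x.
Proof.
  intros Hd D0 Dx Hne HD Hc.
  set (K := (f x - f x0) / (x - x0)).
  assert (Hpt : forall d, 0 < d -> exists t, 0 < t < 1 /\ Rabs (t * x + (1 - t) * x0 - x0) < d).
  { intros d Hdp.
    assert (Ha : 0 < Rabs (x - x0)) by (apply Rabs_pos_lt; lra).
    set (t := Rmin (1/2) (d / (2 * Rabs (x - x0)))).
    assert (t1 : t <= 1/2) by apply Rmin_l.
    assert (t2 : t <= d / (2 * Rabs (x - x0))) by apply Rmin_r.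
    assert (t0 : 0 < t) by (apply Rmin_pos; [lra| apply Rdiv_lt_0_compat; lra]).
    exists t; split; [lra|].
    replace (t * x + (1 - t) * x0 - x0) with (t * (x - x0)) by ring.
    rewrite Rabs_mult, (Rabs_right t) by lra.
    assert (t * Rabs (x - x0) <= d / (2 * Rabs (x - x0)) * Rabs (x - x0)) by
      (apply Rmult_le_compat_r; lra).
    replace (d / (2 * Rabs (x - x0)) * Rabs (x - x0)) with (d / 2) in H by (field; lra).
    lra. }
  destruct (Rlt_or_le x0 x) as [Hlt|Hle].
  - assert (f' x0 <= K).
    { apply (lim_le _ _ _ x0 _ (Hd x0 D0)). intros d Hdp.
      destruct (Hpt d Hdp) as [t [Ht Hr]].
      exists (t * x + (1 - t) * x0). split; [split; [apply HD; auto| nra]|]. split; auto.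
      apply D1; [nra|]. specialize (Hc t Ht).
      unfold K. replace ((f x - f x0) / (x - x0) * (t * x + (1 - t) * x0 - x0)) with
        (t * (f x - f x0)) by (field; lra). lra. }
    assert (f' x0 * (x - x0) <= K * (x - x0)) by (apply Rmult_le_compat_r; lra).
    unfold K in H0. replace ((f x - f x0) / (x - x0) * (x - x0)) with (f x - f x0) in H0 by (field; lra).
    lra.
  - assert (Hlt : x < x0) by lra.
    assert (K <= f' x0).
    { apply (lim_ge _ _ _ x0 _ (Hd x0 D0)). intros d Hdp.
      destruct (Hpt d Hdp) as [t [Ht Hr]].
      exists (t * x + (1 - t) * x0). split; [split; [apply HD; auto| nra]|]. split; auto.
      apply D4; [nra|]. specialize (Hc t Ht).
      unfold K. replace ((f x - f x0) / (x - x0) * (t * x + (1 - t) * x0 - x0)) with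
        (t * (f x - f x0)) by (field; lra). lra. }
    assert (K * (x - x0) >= f' x0 * (x - x0)) by (apply Rmult_ge_compat_neg_l'; lra) || nra.
    unfold K in H0. replace ((f x - f x0) / (x - x0) * (x - x0)) with (f x - f x0) in H0 by (field; lra).
    lra.
Qed.
Lemma divlt1 a s : 0 < s -> a < s -> a / s < 1.
Proof. intros. apply (Rmult_lt_reg_r s); [lra|]. unfold Rdiv. rewrite Rmult_assoc, Rinv_l by lra. lra. Qed.

Definition hf (gamma : R) (eta : R -> R) (b : R) : R := b - gamma * eta b.
Definition pf (beta gamma : R) (eta : R -> R) (w : R) : R := - w + hf gamma eta (Rmin beta w).

Lemma nonneg_mix x y t : 0 <= x -> 0 <= y -> 0 < t < 1 -> nonneg_half_line (t * x + (1 - t) * y).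
Proof. unfold nonneg_half_line; intros; nra. Qed.
Lemma unit_mix x y t : unit_int x -> unit_int y -> 0 < t < 1 -> unit_int (t * x + (1 - t) * y).
Proof. unfold unit_int; intros; nra. Qed.

Lemma eta_tangent_strict beta eta etap x :
  strictly_convex_on eta nonneg_half_line -> is_deriv_on eta etap nonneg_half_line ->
  0 <= beta -> 0 <= x -> x <> beta ->
  eta beta + etap beta * (x - beta) < eta x.
Proof.
  intros Hc Hd Hb Hx Hne.
  assert (T : forall z, 0 <= z -> z <> beta -> eta beta + etap beta * (z - beta) <= eta z).
  { intros z Hz Hzn. apply (tangent eta etap nonneg_half_line); auto.
    - intros t Ht; apply nonneg_mix; auto.
    - intros t Ht. left. apply Hc; unfold nonneg_half_line; auto. }
  set (m := 1/2 * x + (1 - 1/2) * beta).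
  assert (Hm : eta m < 1/2 * eta x + (1 - 1/2) * eta beta) by (apply Hc; unfold nonneg_half_line; auto; lra).
  assert (Tm : eta beta + etap beta * (m - beta) <= eta m) by (apply T; unfold m; lra).
  replace (etap beta * (m - beta)) with (1/2 * (etap beta * (x - beta))) in Tm by (unfold m; ring).
  lra.
Qed.


Definition EtaH gamma beta eta etap := 0 < gamma /\ 0 <= beta /\ gamma * etap beta = 1 /\
  strictly_convex_on eta nonneg_half_line /\ is_deriv_on eta etap nonneg_half_line /\
  increasing_on eta nonneg_half_line.

Lemma h_max gamma beta eta etap x : EtaH gamma beta eta etap -> 0 <= x -> x <> beta ->
  hf gamma eta x < hf gamma eta beta.
Proof.
  intros [Hg [Hb [H1 [Hc [Hd Hi]]]]] Hx Hne.
  pose proof (eta_tangent_strict beta eta etap x Hc Hd Hb Hx Hne) as T.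
  assert (gamma * (eta beta + etap beta * (x - beta)) < gamma * eta x) by (apply Rmult_lt_compat_l; auto).
  replace (gamma * (eta beta + etap beta * (x - beta))) with (gamma * eta beta + (gamma * etap beta) * (x - beta)) in H by ring.
  rewrite H1 in H. unfold hf; lra.
Qed.

Lemma h_conc gamma beta eta etap b c t : EtaH gamma beta eta etap -> 0 <= b -> 0 <= c -> b <> c -> 0 < t < 1 ->
  t * hf gamma eta b + (1 - t) * hf gamma eta c < hf gamma eta (t * b + (1 - t) * c).
Proof.
  intros [Hg [Hb [H1 [Hc [Hd Hi]]]]] ? ? ? ?.
  assert (eta (t * b + (1 - t) * c) < t * eta b + (1 - t) * eta c) by (apply Hc; auto).
  assert (gamma * eta (t * b + (1 - t) * c) < gamma * (t * eta b + (1 - t) * eta c)) by (apply Rmult_lt_compat_l; auto).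
  unfold hf. nra.
Qed.

Lemma h_inc gamma beta eta etap b c : EtaH gamma beta eta etap -> 0 <= b < c -> c <= beta ->
  hf gamma eta b < hf gamma eta c.
Proof.
  intros HE Hbc Hcb.
  destruct (Req_dec c beta) as [->|Hne].
  - apply (h_max _ _ _ etap); auto; lra.
  - set (t := (beta - c) / (beta - b)).
    assert (Ht : 0 < t < 1) by (unfold t; split; [apply Rdiv_lt_0_compat; lra| apply divlt1; lra]).
    assert (Ec : c = t * b + (1 - t) * beta) by (unfold t; field; lra).
    pose proof (h_conc gamma beta eta etap b beta t HE ltac:(lra) ltac:(destruct HE as [_ [? _]]; lra) ltac:(lra) Ht).
    pose proof (h_max gamma beta eta etap b HE ltac:(lra) ltac:(lra)).
    rewrite Ec. nra.
Qed.

Lemma h_dec gamma beta eta etap b c : EtaH gamma beta eta etap -> beta <= c < b ->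
  hf gamma eta b < hf gamma eta c.
Proof.
  intros HE Hbc.
  assert (Hb0 : 0 <= beta) by (destruct HE as [_ [? _]]; lra).
  destruct (Req_dec c beta) as [->|Hne].
  - apply (h_max _ _ _ etap); auto; lra.
  - set (t := (c - beta) / (b - beta)).
    assert (Ht : 0 < t < 1) by (unfold t; split; [apply Rdiv_lt_0_compat; lra| apply divlt1; lra]).
    assert (Ec : c = t * b + (1 - t) * beta) by (unfold t; field; lra).
    pose proof (h_conc gamma beta eta etap b beta t HE ltac:(lra) ltac:(lra) ltac:(lra) Ht).
    pose proof (h_max gamma beta eta etap b HE ltac:(lra) ltac:(lra)).
    rewrite Ec. nra.
Qed.

Lemma h_bound gamma beta eta etap b w : EtaH gamma beta eta etap -> 0 <= b <= w -> b <> Rmin beta w ->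
  - w + hf gamma eta b < pf beta gamma eta w.
Proof.
  intros HE Hb Hne. unfold pf.
  destruct (Rle_or_lt w beta) as [Hw|Hw].
  - rewrite Rmin_right in * by lra.
    pose proof (h_inc gamma beta eta etap b w HE ltac:(lra) Hw). lra.
  - rewrite Rmin_left in * by lra.
    pose proof (h_max gamma beta eta etap b HE ltac:(lra) Hne). lra.
Qed.

Lemma h_le gamma beta eta etap b w : EtaH gamma beta eta etap -> 0 <= b <= w ->
  - w + hf gamma eta b <= pf beta gamma eta w.
Proof.
  intros HE Hb. destruct (Req_dec b (Rmin beta w)) as [->|Hne].
  - unfold pf; lra.
  - left; apply (h_bound _ _ _ etap); auto.
Qed.

Lemma eta_sinc gamma beta eta etap x y : EtaH gamma beta eta etap -> 0 <= x < y -> eta x < eta y.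
Proof.
  intros [Hg [Hb [H1 [Hc [Hd Hi]]]]] Hxy.
  assert (eta x <= eta y) by (apply Hi; unfold nonneg_half_line; lra).
  destruct H; auto.
  assert (eta (1/2 * x + (1 - 1/2) * y) < 1/2 * eta x + (1 - 1/2) * eta y) by (apply Hc; unfold nonneg_half_line; lra).
  assert (eta x <= eta (1/2 * x + (1 - 1/2) * y)) by (apply Hi; unfold nonneg_half_line; lra).
  lra.
Qed.

Lemma pf_dec gamma beta eta etap w' w : EtaH gamma beta eta etap -> 0 <= w' < w ->
  pf beta gamma eta w < pf beta gamma eta w'.
Proof.
  intros HE Hw.
  assert (Hg : 0 < gamma) by (destruct HE; auto).
  assert (Hb0 : 0 <= beta) by (destruct HE as [_ [? _]]; lra).
  assert (C1 : forall x y, 0 <= x < y -> y <= beta -> pf beta gamma eta y < pf beta gamma eta x).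
  { intros x y Hxy Hy. unfold pf, hf. rewrite !Rmin_right by lra.
    pose proof (eta_sinc gamma beta eta etap x y HE Hxy).
    assert (gamma * eta x < gamma * eta y) by (apply Rmult_lt_compat_l; auto). lra. }
  destruct (Rle_or_lt w beta).
  - apply C1; lra.
  - destruct (Rle_or_lt beta w').
    + unfold pf. rewrite !Rmin_left by lra. lra.
    + assert (pf beta gamma eta beta < pf beta gamma eta w') by (apply C1; lra).
      assert (pf beta gamma eta w < pf beta gamma eta beta) by (unfold pf; rewrite !Rmin_left by lra; lra).
      lra.
Qed.

Lemma pf_lip gamma beta eta etap w' w k : EtaH gamma beta eta etap -> 0 <= w' -> 0 <= w -> 0 <= k ->
  w <= w' + k -> pf beta gamma eta w' - k <= pf beta gamma eta w.
Proof.
  intros HE ? ? ? ?.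
  destruct (Rle_or_lt w w').
  - destruct H3 as [H3| ->]; [| lra].
    pose proof (pf_dec gamma beta eta etap w w' HE ltac:(lra)). lra.
  - assert (hf gamma eta (Rmin beta w') <= hf gamma eta (Rmin beta w)).
    { unfold Rmin. destruct (Rle_dec beta w'); destruct (Rle_dec beta w); try lra.
      - left; apply (h_inc gamma beta eta etap w' beta); auto; lra.
      - left; apply (h_inc gamma beta eta etap w' w); auto; lra. }
    unfold pf. lra.
Qed.

Lemma Cp_nonneg (C Cp : R -> R) a : increasing_on C unit_int -> is_deriv_on C Cp unit_int ->
  unit_int a -> 0 <= Cp a.
Proof.
  intros Hi Hd Ha.
  apply (lim_ge _ _ _ a _ (Hd a Ha)). intros d Hdp.
  unfold unit_int in Ha.
  set (y := a + Rmin (d/2) ((1 - a)/2)).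
  assert (m1 : Rmin (d/2) ((1 - a)/2) <= d/2) by apply Rmin_l.
  assert (m2 : Rmin (d/2) ((1 - a)/2) <= (1-a)/2) by apply Rmin_r.
  assert (m0 : 0 < Rmin (d/2) ((1 - a)/2)) by (apply Rmin_pos; lra).
  exists y. unfold y. split; [split; [unfold unit_int; lra | lra]|].
  split. { rewrite Rabs_right; lra. }
  apply D2; [lra|]. rewrite Rmult_0_l.
  assert (C a <= C (a + Rmin (d / 2) ((1 - a) / 2))) by (apply Hi; unfold unit_int; lra). lra.
Qed.

Lemma C_tangent (C Cp : R -> R) a x : strictly_convex_on C unit_int -> is_deriv_on C Cp unit_int ->
  unit_int a -> unit_int x -> C a + Cp a * (x - a) <= C x.
Proof.
  intros Hc Hd Ha Hx. destruct (Req_dec x a) as [->|Hne].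
  - lra.
  - apply (tangent C Cp unit_int); auto.
    + intros t Ht; apply unit_mix; auto.
    + intros t Ht; left; apply Hc; auto.
Qed.

Lemma Cp_small (Cp Cpp : R -> R) e : is_deriv_on Cp Cpp unit_int -> 0 < e ->
  exists a, 0 < a < 1 /\ Cp a < Cp 0 + e.
Proof.
  intros Hd He.
  assert (U0 : unit_int 0) by (unfold unit_int; lra).
  destruct (Hd 0 U0 1 ltac:(lra)) as [al [Hal Hf]].
  set (M := Rabs (Cpp 0) + 1).
  assert (HM : 0 < M) by (unfold M; pose proof (Rabs_pos (Cpp 0)); lra).
  set (a := Rmin (Rmin (al/2) (1/2)) (e / (2 * M))).
  assert (a1 : a <= Rmin (al/2) (1/2)) by apply Rmin_l.
  assert (a2 : a <= e / (2 * M)) by apply Rmin_r.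
  assert (a3 : Rmin (al/2) (1/2) <= al/2) by apply Rmin_l.
  assert (a4 : Rmin (al/2) (1/2) <= 1/2) by apply Rmin_r.
  assert (a0 : 0 < a) by (apply Rmin_pos; [apply Rmin_pos; lra | apply Rdiv_lt_0_compat; lra]).
  exists a. split; [lra|].
  specialize (Hf a). simpl in Hf. unfold Rdist in Hf.
  assert (Hq : Rabs ((Cp a - Cp 0) / (a - 0) - Cpp 0) < 1).
  { apply Hf. split; [split; [unfold unit_int; lra | lra] |].
    rewrite Rabs_right; lra. }
  apply Rabs_def2 in Hq. destruct Hq as [Hq _].
  assert (Hq2 : (Cp a - Cp 0) / (a - 0) < M).
  { unfold M. pose proof (Rle_abs (Cpp 0)). lra. }
  assert (E : Cp a - Cp 0 = (Cp a - Cp 0) / (a - 0) * a) by (field; lra).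
  assert ((Cp a - Cp 0) / (a - 0) * a < M * a) by (apply Rmult_lt_compat_r; lra).
  assert (M * a <= M * (e / (2 * M))) by (apply Rmult_le_compat_l; lra).
  replace (M * (e / (2 * M))) with (e / 2) in H0 by (field; lra).
  lra.
Qed.

Lemma foc (C Cp : R -> R) a wH wL : is_deriv_on C Cp unit_int -> 0 < a < 1 ->
  (forall a', unit_int a' -> worker_utility C wH wL a' <= worker_utility C wH wL a) ->
  wH - wL = Cp a.
Proof.
  intros Hd Ha Hic. unfold worker_utility in Hic.
  assert (Ua : unit_int a) by (unfold unit_int; lra).
  apply Rle_antisym.
  - apply (lim_ge _ _ _ a _ (Hd a Ua)). intros d Hdp.
    set (r := Rmin (d/2) ((1 - a)/2)).
    assert (m1 : r <= d/2) by apply Rmin_l.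
    assert (m2 : r <= (1-a)/2) by apply Rmin_r.
    assert (m0 : 0 < r) by (apply Rmin_pos; lra).
    exists (a + r). split; [split; [unfold unit_int; lra | lra]|].
    split. { rewrite Rabs_right; lra. }
    apply D2; [lra|].
    assert (Hu := Hic (a + r) ltac:(unfold unit_int; lra)). nra.
  - apply (lim_le _ _ _ a _ (Hd a Ua)). intros d Hdp.
    set (r := Rmin (d/2) (a/2)).
    assert (m1 : r <= d/2) by apply Rmin_l.
    assert (m2 : r <= a/2) by apply Rmin_r.
    assert (m0 : 0 < r) by (apply Rmin_pos; lra).
    exists (a - r). split; [split; [unfold unit_int; lra | lra]|].
    split. { rewrite Rabs_left; lra. }
    apply D3; [lra|].
    assert (Hu := Hic (a - r) ltac:(unfold unit_int; lra)). nra.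
Qed.

Lemma sp_eq P y gamma beta eta w :
  state_profit P y gamma eta w (b_star beta w) = P * y + pf beta gamma eta w.
Proof. unfold state_profit, b_star, pf, hf. ring. Qed.

Lemma sp_eq2 P y gamma eta w b :
  state_profit P y gamma eta w b = P * y + (- w + hf gamma eta b).
Proof. unfold state_profit, hf. ring. Qed.

Lemma star_feasible u (C Cp : R -> R) beta a :
  increasing_on C unit_int -> strictly_convex_on C unit_int -> is_deriv_on C Cp unit_int ->
  0 <= beta -> unit_int a ->
  feasible u C a (wH_star u C Cp a) (wL_star u C Cp a)
    (b_star beta (wH_star u C Cp a)) (b_star beta (wL_star u C Cp a)).
Proof.
  intros Hi Hc Hd Hb Ha.
  pose proof (Cp_nonneg C Cp a Hi Hd Ha) as Hcp.
  assert (L0 : 0 <= wL_star u C Cp a) by (unfold wL_star; apply Rmax_l).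
  assert (L1 : u - a * Cp a + C a <= wL_star u C Cp a) by (unfold wL_star; apply Rmax_r).
  assert (H0 : 0 <= wH_star u C Cp a) by (unfold wH_star; lra).
  unfold feasible, worker_utility. split; [auto|]. split; [|split; [|split; [auto|split; [auto|]]]].
  - intros a' Ha'. pose proof (C_tangent C Cp a a' Hc Hd Ha Ha'). unfold wH_star. nra.
  - unfold wH_star. nra.
  - unfold b_star. split; split; try apply Rmin_r; apply Rmin_glb; lra.
Qed.

Theorem corollary1
  (P yH yL u gamma : R) (C Cp Cpp eta etap etapp : R -> R) (beta astar : R)
  (HP : 0 < P) (Hy : yL < yH) (HyL : 0 <= yL)
  (Hgamma : 0 < gamma <= 1)
  (* effort cost C on [0,1), with derivatives Cp = C', Cpp = C'' *)
  (HC0 : C 0 = 0)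
  (HCinc : increasing_on C unit_int)
  (HCconv : strictly_convex_on C unit_int)
  (HCd : is_deriv_on C Cp unit_int)
  (HCdd : is_deriv_on Cp Cpp unit_int)
  (HCinf : tends_to_infty_at_1 C)
  (* penalty eta on [0,oo), with derivatives etap = eta', etapp = eta'' *)
  (Heta0 : eta 0 = 0)
  (Hetainc : increasing_on eta nonneg_half_line)
  (Hetaconv : strictly_convex_on eta nonneg_half_line)
  (Hetad : is_deriv_on eta etap nonneg_half_line)
  (Hetadd : is_deriv_on etap etapp nonneg_half_line)
  (* beta >= 0 with gamma * eta'(beta) = 1 *)
  (Hbeta : 0 <= beta) (Hbeta1 : gamma * etap beta = 1)
  (* hypothesis of the corollary *)
  (Hmarg : Cp 0 < P * yH - P * yL)
  (* astar is an optimal effort level: a maximizer of g on [0,1) *)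
  (Hastar : unit_int astar)
  (Hgmax : forall a, unit_int a ->
     g_fun P yH yL u gamma beta C Cp eta a
     <= g_fun P yH yL u gamma beta C Cp eta astar) :
  forall wH wL bH bL,
    optimal_solution P yH yL u gamma C eta astar wH wL bH bL ->
    wH = wH_star u C Cp astar /\ wL = wL_star u C Cp astar /\
    bH = b_star beta (wH_star u C Cp astar) /\
    bL = b_star beta (wL_star u C Cp astar).
Proof.
  intros wH wL bH bL [Hfeas Hopt].
  assert (HE : EtaH gamma beta eta etap) by (repeat split; auto; lra).
  set (pi := pf beta gamma eta).
  assert (Hpos : 0 < astar).
  { pose proof Hastar as Hast; destruct Hast as [[h|h] _]; auto. exfalso. subst astar.
    destruct (Cp_small Cp Cpp (P * yH - P * yL - Cp 0) HCdd ltac:(lra)) as [a [Ha Hca]].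
    assert (Ua : unit_int a) by (unfold unit_int; lra).
    specialize (Hgmax a Ua). unfold g_fun, objective in Hgmax.
    rewrite !sp_eq in Hgmax.
    pose proof (Cp_nonneg C Cp a HCinc HCd Ua) as Hcp.
    pose proof (C_tangent C Cp a 0 HCconv HCd Ua ltac:(unfold unit_int; lra)) as Tg.
    set (W0 := wL_star u C Cp 0) in *.
    set (WL := wL_star u C Cp a) in *.
    assert (W00 : 0 <= W0) by (unfold W0, wL_star; apply Rmax_l).
    assert (WL0 : 0 <= WL) by (unfold WL, wL_star; apply Rmax_l).
    assert (WLW0 : WL <= W0).
    { unfold WL, W0, wL_star. rewrite HC0. unfold Rmax.
      destruct (Rle_dec 0 (u - a * Cp a + C a)); destruct (Rle_dec 0 (u - 0 * Cp 0 + 0)); nra. }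
    assert (P1 : pi W0 - 0 <= pi WL) by (apply (pf_lip gamma beta eta etap); auto; lra).
    assert (P2 : pi W0 - Cp a <= pi (wH_star u C Cp a)).
    { apply (pf_lip gamma beta eta etap); auto; unfold wH_star; fold WL; lra. }
    fold pi in Hgmax.
    assert (0 <= a * (pi (wH_star u C Cp a) - (pi W0 - Cp a))) by (apply Rmult_le_pos; lra).
    assert (0 <= (1 - a) * (pi WL - pi W0)) by (apply Rmult_le_pos; lra).
    assert (0 < a * (P * yH - P * yL - Cp a)) by (apply Rmult_lt_0_compat; lra).
    nra. }
  assert (Ha1 : astar < 1) by (destruct Hastar; lra).
  destruct Hfeas as (_ & Hic & Hpc & HwH & HwL & HbL & HbH).
  pose proof (foc C Cp astar wH wL HCd ltac:(lra) Hic) as Hfoc.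
  assert (EwH : wH = wL + Cp astar) by lra.
  unfold worker_utility in Hpc. rewrite EwH in Hpc.
  assert (HwLs : wL_star u C Cp astar <= wL) by (unfold wL_star; apply Rmax_lub; lra).
  pose proof (Hopt _ _ _ _ _ (star_feasible u C Cp beta astar HCinc HCconv HCd Hbeta Hastar)) as Hcmp.
  unfold objective in Hcmp. rewrite !sp_eq, !sp_eq2 in Hcmp. fold pi in Hcmp.
  set (WL := wL_star u C Cp astar) in *.
  assert (EWH : wH_star u C Cp astar = WL + Cp astar) by reflexivity.
  rewrite EWH in Hcmp |- *.
  assert (BH : - wH + hf gamma eta bH <= pi wH) by (apply (h_le _ _ _ etap); auto).
  assert (BL : - wL + hf gamma eta bL <= pi wL) by (apply (h_le _ _ _ etap); auto).
  assert (Hwl : wL = WL).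
  { destruct HwLs as [h|h]; auto. exfalso.
    assert (WL0 : 0 <= WL) by (unfold WL, wL_star; apply Rmax_l).
    assert (pi wL < pi WL) by (apply (pf_dec _ _ _ etap); auto; lra).
    assert (pi wH < pi (WL + Cp astar)).
    { apply (pf_dec _ _ _ etap); auto. pose proof (Cp_nonneg C Cp astar HCinc HCd Hastar).
      split; [|lra]. assert (0 <= WL) by (unfold WL, wL_star; apply Rmax_l). lra. }
    assert (0 < astar * (pi (WL + Cp astar) - pi wH)) by (apply Rmult_lt_0_compat; lra).
    assert (0 < (1 - astar) * (pi WL - pi wL)) by (apply Rmult_lt_0_compat; lra).
    assert (0 <= astar * (pi wH - (- wH + hf gamma eta bH))) by (apply Rmult_le_pos; lra).
    assert (0 <= (1 - astar) * (pi wL - (- wL + hf gamma eta bL))) by (apply Rmult_le_pos; lra).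
    nra. }
  assert (Hwh : wH = WL + Cp astar) by lra.
  rewrite <- Hwl in Hcmp |- *. rewrite <- EwH in Hcmp |- *.
  split; [auto|]. split; [auto|].
  split; (apply Classical_Prop.NNPP; intro Hne).
  - assert (- wH + hf gamma eta bH < pi wH) by (apply (h_bound _ _ _ etap); auto).
    assert (0 < astar * (pi wH - (- wH + hf gamma eta bH))) by (apply Rmult_lt_0_compat; lra).
    assert (0 <= (1 - astar) * (pi wL - (- wL + hf gamma eta bL))) by (apply Rmult_le_pos; lra).
    nra.
  - assert (- wL + hf gamma eta bL < pi wL) by (apply (h_bound _ _ _ etap); auto).
    assert (0 <= astar * (pi wH - (- wH + hf gamma eta bH))) by (apply Rmult_le_pos; lra).
    assert (0 < (1 - astar) * (pi wL - (- wL + hf gamma eta bL))) by (apply Rmult_lt_0_compat; lra).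
    nra.
Qed.
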